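(* Let $p>d+1$. For every function $u:\mathbb Z^d\to\mathbb R$ and every $a\in\Omega$, $$\sum_{b\in\mathbb B^d}|\nabla u(b)|^2\,\mathrm{dist}_a^{-p}(x_b,y_b)\le C(p,d)\sum_{b\in\mathbb B^d}a(b)|\nabla u(b)|^2,$$ with $C(p,d):=\sum_{x\in\mathbb Z^d}(|x|+1)^{1-p}$, whenever the sums converge (with the convention $1/\infty=0$).
   Context: $\mathbb B^d$ is the set of nearest-neighbour bonds $\{x,x+e_i\}$ of $\mathbb Z^d$; $x_b,y_b$ endpoints of $b$ with $y_b-x_b\in\{e_1,\dots,e_d\}$; $\nabla u(b)=u(y_b)-u(x_b)$. $\Omega=[0,1]^{\mathbb B^d}$. Chemical distance $\mathrm{dist}_a(x,y)=\inf\{\sum_{b\in\pi}a(b)^{-1}:\pi$ a nearest-neighbour path from $x$ to $y\}$, with $1/0=+\infty$. *)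

(* Defs.v *)
From HB Require Import structures.
From mathcomp Require Import all_boot all_order all_algebra.
From mathcomp Require Import all_classical all_reals all_analysis.
Set Implicit Arguments. Unset Strict Implicit. Unset Printing Implicit Defensive.
Import Order.TTheory GRing.Theory Num.Theory.
Local Open Scope ring_scope.
Local Open Scope classical_set_scope.

Definition zpt (d : nat) := 'rV[int]_d.

Definition evec (d : nat) (i : 'I_d) : zpt d := \row_j ((i == j)%:R : int).

(* A bond b = {x, x + e_i} of B^d is encoded uniquely by the pair (x, i). *)
Definition bond (d : nat) := (zpt d * 'I_d)%type.
Definition xb (d : nat) (b : bond d) : zpt d := b.1.
Definition yb (d : nat) (b : bond d) : zpt d := b.1 + evec b.2.

Definition grad (R : realType) (d : nat) (u : zpt d -> R) (b : bond d) : R :=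
  u (yb b) - u (xb b).

Definition in_Omega (R : realType) (d : nat) (a : bond d -> R) : Prop :=
  forall b, 0 <= a b <= 1.

Definition inv_cond (R : realType) (d : nat) (a : bond d -> R) (b : bond d) : \bar R :=
  if a b == 0 then +oo%E else ((a b)^-1)%:E.

(* A nearest-neighbour path is a sequence of bonds each traversed in a given
   direction (true: x_b -> y_b, false: y_b -> x_b). *)
Definition osrc (d : nat) (s : bond d * bool) : zpt d :=
  if s.2 then xb s.1 else yb s.1.
Definition otgt (d : nat) (s : bond d * bool) : zpt d :=
  if s.2 then yb s.1 else xb s.1.

Fixpoint nn_path (d : nat) (x : zpt d) (p : seq (bond d * bool)) (y : zpt d) : Prop :=
  match p with
  | [::] => x = y
  | s :: p' => osrc s = x /\ nn_path (otgt s) p' y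
  end.

Definition path_cost (R : realType) (d : nat) (a : bond d -> R)
  (p : seq (bond d * bool)) : \bar R :=
  (\sum_(s <- p) inv_cond a s.1)%E.

Definition chem_dist (R : realType) (d : nat) (a : bond d -> R) (x y : zpt d) : \bar R :=
  ereal_inf [set path_cost a p | p in [set p | nn_path x p y]].

Definition chem_dist_pow (R : realType) (d : nat) (a : bond d -> R) (p : R)
  (x y : zpt d) : R :=
  match chem_dist a x y with
  | r%:E => r `^ (- p)
  | _ => 0
  end.

Definition enorm (R : realType) (d : nat) (x : zpt d) : R :=
  Num.sqrt (\sum_(i < d) ((x ord0 i)%:~R : R) ^+ 2).

Definition Cpd (R : realType) (d : nat) (p : R) : \bar R :=
  \esum_(x in [set: zpt d]) ((enorm R x + 1) `^ (1 - p))%:E.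

(* Main.v *)
Require Import Defs.
From HB Require Import structures.
From mathcomp Require Import all_boot all_order all_algebra.
From mathcomp Require Import all_classical all_reals all_analysis.
Import Order.TTheory GRing.Theory Num.Theory.
Local Open Scope ring_scope.
Local Open Scope classical_set_scope.

From mathcomp Require Import ring lra zify.
Set Implicit Arguments. Unset Strict Implicit. Unset Printing Implicit Defensive.


Section Basics.
Variables (R : realType) (d : nat).

Definition l1 (x : zpt d) : R := \sum_(i < d) `|((x ord0 i)%:~R : R)|.

Lemma l1_ge0 x : 0 <= l1 x.
Proof. by apply: sumr_ge0 => i _. Qed.

Lemma l1D x y : l1 (x + y) <= l1 x + l1 y.
Proof.
rewrite /l1 -big_split /=; apply: ler_sum => i _.
by rewrite mxE intrD ler_normD.
Qed.

Lemma l1N x : l1 (- x) = l1 x.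
Proof. by rewrite /l1; apply: eq_bigr => i _; rewrite mxE intrN normrN. Qed.

Lemma l1_evec i : l1 (evec i) = 1.
Proof.
rewrite /l1 (bigD1 i) //= big1 ?addr0.
  by rewrite /evec mxE eqxx normr1.
by move=> j /negPf ji; rewrite /evec mxE eq_sym ji normr0.
Qed.

Lemma sqsum_le (I : Type) (r : seq I) (f : I -> R) :
  \sum_(i <- r) f i ^+ 2 <= (\sum_(i <- r) `|f i|) ^+ 2.
Proof.
have : 0 <= \sum_(i <- r) `|f i| /\ \sum_(i <- r) f i ^+ 2 <= (\sum_(i <- r) `|f i|) ^+ 2.
  elim/big_ind2: _ => //.
  - move=> a b c e [b0 h1] [e0 h2]; split; first exact: addr_ge0.
    apply: (le_trans (lerD h1 h2)); nra.
  - by move=> i _; split => //; rewrite real_normK ?num_real.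
by case.
Qed.

Lemma enorm_l1 x : enorm R x <= l1 x.
Proof.
rewrite /enorm -(ger0_norm (l1_ge0 x)) -sqrtr_sqr.
rewrite ler_sqrt; last by rewrite sqr_ge0.
exact: sqsum_le.
Qed.


Lemma l1_0 : l1 0 = 0.
Proof. by rewrite /l1 big1 // => i _; rewrite mxE normr0. Qed.

Lemma osrc_otgt (s : bond d * bool) : osrc s + otgt s = xb s.1 + yb s.1.
Proof. by rewrite /osrc /otgt; case: s.2 => //; rewrite addrC. Qed.

Lemma step_l1 (s : bond d * bool) : l1 (otgt s - osrc s) = 1.
Proof.
rewrite /osrc /otgt /yb /xb; case: s.2.
  by rewrite addrAC subrr add0r l1_evec.
by rewrite opprD addrA subrr add0r l1N l1_evec.
Qed.

Lemma path_disp x (q : seq (bond d * bool)) y :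
  nn_path x q y -> l1 (y - x) <= (size q)%:R.
Proof.
elim: q x => [|s q IH] x /=.
  by move=> ->; rewrite subrr l1_0.
move=> [hs hp]; rewrite -(addrNK (otgt s) y) -addrA.
apply: (le_trans (l1D _ _)); rewrite -hs step_l1 mulrSr lerD2r.
exact: IH.
Qed.

Lemma path_pos x (q : seq (bond d * bool)) y :
  nn_path x q y -> forall s, s \in q ->
  l1 (x + y - (xb s.1 + yb s.1)) + 1 <= (size q)%:R.
Proof.
elim: q x => [|s0 q IH] x //= [hs hp] s; rewrite inE => /orP[/eqP ->|sq].
  rewrite -osrc_otgt hs [x + y]addrC opprD addrA addrK mulrSr lerD2r.
  exact: path_disp hp.
have := IH _ hp s sq.
have -> : x + y - (xb s.1 + yb s.1) = (x - otgt s0) + (otgt s0 + y - (xb s.1 + yb s.1)).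
  by rewrite !addrA addrNK.
move=> h; apply: (le_trans (lerD (l1D _ _) (lexx 1))).
rewrite -hs -opprB l1N step_l1 mulrSr.
by rewrite lerD2r addrC.
Qed.

Lemma nn_path_cat x (p1 p2 : seq (bond d * bool)) y :
  nn_path x (p1 ++ p2) y <-> exists m, nn_path x p1 m /\ nn_path m p2 y.
Proof.
elim: p1 x => [|s p1 IH] x /=.
  by split; [move=> h; exists x | move=> [m [-> h]]].
split.
  by move=> [hs /IH [m [h1 h2]]]; exists m.
by move=> [m [[hs h1] h2]]; split => //; apply/IH; exists m.
Qed.

Lemma path_telescope (u : zpt d -> R) x (q : seq (bond d * bool)) y :
  nn_path x q y ->
  u y - u x = \sum_(s <- q) (if s.2 then grad u s.1 else - grad u s.1).
Proof.
elim: q x => [|s q IH] x /=.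
  by move=> ->; rewrite subrr big_nil.
move=> [hs hp]; rewrite big_cons -(IH _ hp) -hs /osrc /otgt /grad.
by case: s.2 => /=; rewrite ?opprB [RHS]addrC [RHS]addrA addrNK.
Qed.

End Basics.

Lemma core (R : realType) (W Q X t : R) : 0 <= W -> 0 <= Q -> X ^+ 2 <= W * Q -> 2 * t * X <= Q + W * t ^+ 2.
Proof.
move=> W0 Q0 h.
have [W00|Wp] := eqVneq W 0.
  have h2 : X ^+ 2 <= 0 by move: h; rewrite W00 mul0r.
  have X0 : X = 0 by apply/eqP; rewrite -sqrf_eq0 eq_le h2 sqr_ge0.
  by rewrite X0 W00 mulr0 mul0r addr0.
have W0' : 0 < W by rewrite lt_def Wp.
have : 0 <= W * (Q + W * t ^+ 2 - 2 * t * X).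
  have -> : W * (Q + W * t ^+ 2 - 2 * t * X) = (W * Q - X ^+ 2) + (W * t - X) ^+ 2 by ring.
  by apply: addr_ge0; [rewrite subr_ge0|apply: sqr_ge0].
rewrite pmulr_rge0 //; lra.
Qed.
Lemma cs_step (R : realType) (w W Q X x : R) : 0 < w -> 0 <= W -> 0 <= Q -> X ^+ 2 <= W * Q ->
  (x + X) ^+ 2 <= (w + W) * (x ^+ 2 / w + Q).
Proof.
move=> w0 W0 Q0 h.
pose t := x / w.
have hx : x = t * w by rewrite /t divfK // gt_eqF.
have hx2 : x ^+ 2 / w = t ^+ 2 * w by rewrite hx; field; rewrite gt_eqF.
rewrite hx2 hx.
have c := @core _ W Q X t W0 Q0 h.
rewrite -subr_ge0.
have -> : (w + W) * (t ^+ 2 * w + Q) - (t * w + X) ^+ 2 = w * (Q + W * t ^+ 2 - 2 * t * X) + (W * Q - X ^+ 2) by ring.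
apply: addr_ge0; last by rewrite subr_ge0.
by apply: mulr_ge0; [exact: ltW|rewrite subr_ge0].
Qed.

Lemma cs_seq (R : realType) (I : Type) (r : seq I) (w x : I -> R) : all (fun i => 0 < w i) r ->
 (\sum_(i <- r) x i) ^+ 2 <= (\sum_(i <- r) w i) * (\sum_(i <- r) x i ^+ 2 / w i).
Proof.
suff : all (fun i => 0 < w i) r -> [/\ 0 <= \sum_(i <- r) w i, 0 <= \sum_(i <- r) x i ^+ 2 / w i &
 (\sum_(i <- r) x i) ^+ 2 <= (\sum_(i <- r) w i) * (\sum_(i <- r) x i ^+ 2 / w i)].
  by move=> h /h [].
elim: r => [|i r IH] /=.
  by rewrite !big_nil mul0r expr2 mulr0.
move=> /andP[wi /IH [h1 h2 h3]]; rewrite !big_cons; split.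
- by apply: addr_ge0 => //; exact: ltW.
- by apply: addr_ge0 => //; apply: divr_ge0; [exact: sqr_ge0|exact: ltW].
- exact: cs_step.
Qed.


Section Cost.
Variables (R : realType) (d : nat) (a : bond d -> R).
Hypothesis Ha : in_Omega a.

Lemma inv_cond_ge1 b : (1 <= inv_cond a b)%E.
Proof.
rewrite /inv_cond; case: eqP => [_|/eqP h]; first exact: leey.
have [a0 a1] := andP (Ha b).
have ap : 0 < a b by rewrite lt_def h a0.
by rewrite lee_fin invf_ge1.
Qed.

Lemma inv_cond_ge0 b : (0 <= inv_cond a b)%E.
Proof. exact: le_trans (inv_cond_ge1 b). Qed.

Lemma cost_ge_size q : (((size q)%:R : R)%:E <= path_cost a q)%E.
Proof.
elim: q => [|s q IH]; first by rewrite /path_cost big_nil.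
rewrite /path_cost big_cons /= mulrS EFinD; apply: leeD => //.
exact: inv_cond_ge1.
Qed.

Lemma cost_cat q1 q2 : path_cost a (q1 ++ q2) = (path_cost a q1 + path_cost a q2)%E.
Proof. by rewrite /path_cost big_cat. Qed.

Lemma cost_ge0 q : (0 <= path_cost a q)%E.
Proof. by apply: sume_ge0 => s _; exact: inv_cond_ge0. Qed.

Lemma cost_fin q : (path_cost a q < +oo)%E ->
  all (fun s => 0 < a s.1) q /\ path_cost a q = (\sum_(s <- q) (a s.1)^-1)%:E.
Proof.
elim: q => [|s q IH]; first by rewrite /path_cost !big_nil.
rewrite {1}/path_cost big_cons -/(path_cost a q) /= => h.
have [a0 a1] := andP (Ha s.1).
move: h; rewrite /inv_cond; case: eqP => [_|/eqP hne].
  by rewrite addye ?ltxx // gt_eqF // (lt_le_trans _ (cost_ge0 q)).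
have ap : 0 < a s.1 by rewrite lt_def hne a0.
have [->|hq] := eqVneq (path_cost a q) +oo%E.
  by rewrite addey.
have hq' : (path_cost a q < +oo)%E by rewrite lt_neqAle hq leey.
have [h1 h2] := IH hq'.
rewrite ap h1 big_cons EFinD /= => _; split => //.
by rewrite /path_cost big_cons -/(path_cost a q) h2 /inv_cond (negbTE hne).
Qed.

Lemma chem_ge1 x y : x != y -> (1 <= chem_dist a x y)%E.
Proof.
move=> xy; apply: le_ereal_inf_tmp => _ [q hq <-].
have : q != [::] by case: q hq => //= hxy; rewrite hxy eqxx in xy.
case: q hq => // s q _ _; apply: le_trans (cost_ge_size _).
by rewrite lee_fin /= ler1n.
Qed.

Lemma good_path x y r c : chem_dist a x y = r%:E -> r < c ->
  exists q, nn_path x q y /\ (path_cost a q < c%:E)%E.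
Proof.
move=> hr rc; have : (chem_dist a x y < c%:E)%E by rewrite hr lte_fin.
by move=> /ereal_inf_lt [_ [q hq <-] h]; exists q.
Qed.

End Cost.


Lemma not_uniq_split (T U : eqType) (f : T -> U) (s : seq T) : ~~ uniq (map f s) ->
  exists s1 s2 s3 u v, s = s1 ++ u :: s2 ++ v :: s3 /\ f u = f v.
Proof.
elim: s => [|u s IH] //=; rewrite negb_and negbK => /orP[/mapP [v vs fv]|/IH].
  case/splitPr: vs => s2 s3.
  by exists [::], s2, s3, u, v.
move=> [s1 [s2 [s3 [u' [v [-> h]]]]]].
by exists (u :: s1), s2, s3, u', v.
Qed.

Lemma cost_cons (R : realType) (d : nat) (a : bond d -> R) s q :
  path_cost a (s :: q) = (inv_cond a s.1 + path_cost a q)%E.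
Proof. by rewrite /path_cost big_cons. Qed.

Section Short.
Variables (R : realType) (d : nat) (a : bond d -> R).
Hypothesis Ha : in_Omega a.

Lemma short_path x y c n q : (size q <= n)%N -> nn_path x q y -> (path_cost a q < c)%E ->
  exists q', [/\ nn_path x q' y, (path_cost a q' < c)%E & uniq (map fst q')].
Proof.
elim: n q => [|n IH] q.
  by rewrite leqn0 => /nilP -> h1 h2; exists [::].
move=> hs hp hc.
have [hu|hnu] := boolP (uniq (map fst q)); first by exists q.
have [q1 [q2 [q3 [s1 [s2 [E h12]]]]]] := not_uniq_split hnu.
subst q.
move: hp => /nn_path_cat [m1 [h1 /= [hs1 /nn_path_cat [m2 [h2 /= [hs2 h3]]]]]].
have c0 := cost_ge0 Ha.
have e1 : (path_cost a (q1 ++ s1 :: q2 ++ s2 :: q3) =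
   path_cost a q1 + inv_cond a s1.1 + path_cost a q2 + inv_cond a s2.1 + path_cost a q3)%E.
  by rewrite /path_cost big_cat big_cons big_cat big_cons /= !addrA.
have [e2|e2] := eqVneq s1.2 s2.2.
  apply: (IH (q1 ++ s2 :: q3)).
  - move: hs; rewrite !size_cat /= size_cat /=; lia.
  - apply/nn_path_cat; exists m1; split => //=; split => //.
    by rewrite -hs1 /osrc e2 h12.
  - apply: le_lt_trans hc; rewrite e1 cost_cat cost_cons !addeA.
    apply: leeD => //; apply: leeD => //; rewrite -addeA; apply: leeDl.
    by apply: adde_ge0; [exact: inv_cond_ge0|exact: c0].
apply: (IH (q1 ++ q3)).
- move: hs; rewrite !size_cat /= size_cat /=; lia.
- apply/nn_path_cat; exists m1; split => //=.
  have -> : m1 = otgt s2 by rewrite -hs1 /osrc /otgt h12; move: e2; case: s1.2; case: s2.2.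
  by [].
- apply: le_lt_trans hc; rewrite e1 cost_cat.
  apply: leeD => //; rewrite -!addeA; apply: leeDl.
  by apply: adde_ge0; [exact: inv_cond_ge0|apply: adde_ge0; [exact: c0|
    exact: inv_cond_ge0]].
Qed.

End Short.


Lemma powR_anti (R : realType) (x y s : R) : 0 < x -> x <= y -> s <= 0 -> y `^ s <= x `^ s.
Proof.
move=> x0 xy s0.
have y0 : 0 < y by exact: lt_le_trans x0 xy.
have e : forall z : R, z `^ s = (z `^ (- s))^-1 by move=> z; rewrite -powRN opprK.
rewrite !e lef_pV2 ?posrE ?powR_gt0 //.
have h0 : 0 <= - s by rewrite oppr_ge0.
have hx : x \in Num.nneg by rewrite nnegrE ltW.
have hy : y \in Num.nneg by rewrite nnegrE ltW.
exact: (@ge0_ler_powR R (- s) h0 x y hx hy xy).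
Qed.

Lemma xb_neq_yb (d : nat) (b : bond d) : xb b != yb b.
Proof.
apply/negP => /eqP h.
have e1 : evec b.2 = yb b - xb b by rewrite /yb addrAC subrr add0r.
have : evec b.2 = 0 by rewrite e1 h subrr.
move/matrixP => /(_ ord0 b.2); rewrite /evec !mxE eqxx => /eqP.
by rewrite oner_eq0.
Qed.

Section KL.
Variables (R : realType) (d : nat) (a : bond d -> R) (u : zpt d -> R) (p : R).
Hypothesis Ha : in_Omega a.
Hypothesis p1 : 1 <= p.

Definition zz (b e : bond d) : zpt d := xb b + yb b - (xb e + yb e).
Definition wgt (b e : bond d) : R := (enorm R (zz b e) + 1) `^ (1 - p).
Definition en (e : bond d) : R := a e * `|grad u e| ^+ 2.

Lemma KL b r eta : chem_dist a (xb b) (yb b) = r%:E -> 1 < eta ->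
  exists q, [/\ nn_path (xb b) q (yb b), uniq (map fst q) &
   `|grad u b| ^+ 2 * r `^ (- p) <= eta `^ p * \sum_(s <- q) wgt b s.1 * en s.1].
Proof.
move=> hr eta1.
have r1 : 1 <= r by rewrite -lee_fin -hr; apply: chem_ge1 => //; exact: xb_neq_yb.
have r0 : 0 < r by lra.
have [q0 [hp0 hc0]] := good_path (c := eta * r) hr ltac:(nra).
have [q [hp hc hu]] := short_path Ha (leqnn (size q0)) hp0 hc0.
exists q; split => //.
have [hall hW] := cost_fin Ha (lt_trans hc (ltry _)).
set W := \sum_(s <- q) (a s.1)^-1 in hW.
have WL : W < eta * r by rewrite -lte_fin -hW.
have sW : (size q)%:R <= W by rewrite -lee_fin -hW; exact: cost_ge_size.
have h1 : `|grad u b| <= \sum_(s <- q) `|grad u s.1|.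
  rewrite /grad (path_telescope u hp); apply: (le_trans (ler_norm_sum _ _ _)).
  by apply: ler_sum => s _; case: s.2; rewrite ?normrN.
have hall' : all (fun s => 0 < (a s.1)^-1) q.
  by apply: sub_all hall => s; rewrite invr_gt0.
have h2 := @cs_seq R _ q _ (fun s => `|grad u s.1|) hall'.
have h2' : \sum_(s <- q) `|grad u s.1| ^+ 2 / (a s.1)^-1 = \sum_(s <- q) en s.1.
  by apply: eq_bigr => s _; rewrite invrK mulrC.
rewrite h2' -/W in h2.
have en0 : 0 <= \sum_(s <- q) en s.1.
  by apply: sumr_ge0 => s _; rewrite /en; apply: mulr_ge0; [case/andP: (Ha s.1)|exact: sqr_ge0].
have h3 : `|grad u b| ^+ 2 <= W * \sum_(s <- q) en s.1.
  apply: le_trans h2; rewrite !expr2; apply: ler_pM => //.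
have rp0 : 0 <= r `^ (- p) by exact: powR_ge0.
have h4 : `|grad u b| ^+ 2 * r `^ (- p) <= eta * r `^ (1 - p) * \sum_(s <- q) en s.1.
  have -> : r `^ (1 - p) = r * r `^ (- p).
    by rewrite powRD ?powRr1 ?ltW // (gt_eqF r0) implybT.
  apply: (le_trans (ler_wpM2r rp0 h3)).
  have WL2 : 0 <= eta * r - W by rewrite subr_ge0 ltW.
  have := mulr_ge0 (mulr_ge0 WL2 en0) rp0.
  nra.
apply: (le_trans h4); rewrite !mulr_sumr !big_seq.
apply: ler_sum => s sq.
have hz := @path_pos R _ _ _ _ hp _ sq.
have he := @enorm_l1 R _ (zz b s.1).
have en1 : 0 <= en s.1.
  by rewrite /en; apply: mulr_ge0; [case/andP: (Ha s.1)|exact: sqr_ge0].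
have m0 : 0 < enorm R (zz b s.1) + 1.
  by apply: ltr_pwDr => //; rewrite /enorm sqrtr_ge0.
have mle : enorm R (zz b s.1) + 1 <= eta * r.
  rewrite -/(zz b s.1) in hz; lra.
have eta0 : 0 < eta by lra.
have hw : (eta * r) `^ (1 - p) <= wgt b s.1.
  rewrite /wgt; apply: powR_anti => //.
  by rewrite subr_le0.
rewrite (powRM _ (ltW eta0) (ltW r0)) in hw.
have ee : eta `^ p * eta `^ (1 - p) = eta.
  by rewrite -powRD ?(gt_eqF eta0) ?implybT // addrC subrK powRr1 // ltW.
have hpe : 0 <= eta `^ p by exact: powR_ge0.
rewrite mulrA; apply: ler_wpM2r => //.
by rewrite -{1}ee -mulrA ler_pM2l ?powR_gt0.
Qed.

End KL.


Lemma esum_scale_le (R : realType) (T : choiceType) (c : \bar R) (f : T -> \bar R) :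
  (0 <= c)%E -> (forall x, 0 <= f x)%E ->
  (\esum_(x in [set: T]) (c * f x) <= c * \esum_(x in [set: T]) f x)%E.
Proof.
move=> c0 f0; apply: ge_ereal_sup => _ [X [finX _] <-] /=.
rewrite -ge0_mule_fsumr //; apply: lee_wpmul2l => //.
by apply: esum_ge; exists X.
Qed.

Lemma esum_swap (R : realType) (T : choiceType) (F : T -> T -> \bar R) :
  (forall x y, 0 <= F x y)%E ->
  \esum_(x in [set: T]) \esum_(y in [set: T]) F x y =
  \esum_(y in [set: T]) \esum_(x in [set: T]) F x y.
Proof.
move=> F0.
rewrite (esum_esum (I := [set: T]) (J := fun=> [set: T]) (a := F)) //.
rewrite (esum_esum (I := [set: T]) (J := fun=> [set: T]) (a := fun y x => F x y)) //.
apply: (reindex_esum _ _ (fun k => (k.2, k.1))); split.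
- by move=> [x y] _.
- by move=> [x1 y1] [x2 y2] _ _ [-> ->].
- by move=> [x y] _; exists (y, x).
Qed.

Lemma esum_inj_le (R : realType) (T T' : choiceType) (e : T -> T') (h : T' -> \bar R) :
  injective e -> (forall z, 0 <= h z)%E ->
  (\esum_(x in [set: T]) h (e x) <= \esum_(z in [set: T']) h z)%E.
Proof.
move=> ei h0; rewrite -(esum_image [set: T] e h); last by move=> x y _ _; exact: ei.
rewrite esum_mkcond [X in (_ <= X)%E]esum_mkcond; apply: le_esum => z _.
rewrite [X in (_ <= X)%E]ifT ?inE //.
by case: ifP.
Qed.

Lemma sum_inj (d : nat) : injective (fun b : bond d => xb b + yb b).
Proof.
move=> [x i] [x' i']; rewrite /xb /yb /= => h.
have hj : forall j, x ord0 j + (x ord0 j + ((i == j)%:R : int)) =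
                    x' ord0 j + (x' ord0 j + ((i' == j)%:R : int)).
  by move=> j; move/matrixP: h => /(_ ord0 j); rewrite !mxE.
have ii : i = i'.
  have [//|ne] := eqVneq i i'.
  move: (hj i); rewrite eqxx eq_sym (negbTE ne) /=; lia.
subst i'; congr pair; apply/matrixP => k j.
move/matrixP: h => /(_ k j); rewrite !mxE.
by case: (i == j) => /=; lia.
Qed.


Section Main.
Variables (R : realType) (d : nat) (p : R) (u : zpt d -> R) (a : bond d -> R).
Hypothesis Ha : in_Omega a.
Hypothesis p1 : 1 <= p.
Variable eta : R.
Hypothesis eta1 : 1 < eta.

Definition good (b : bond d) (q : seq (bond d * bool)) : Prop :=
  forall r, chem_dist a (xb b) (yb b) = r%:E -> uniq (map fst q) /\
   `|grad u b| ^+ 2 * r `^ (- p) <= eta `^ p * \sum_(s <- q) wgt p b s.1 * en a u s.1.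

Lemma exists_good b : exists q, good b q.
Proof.
case E: (chem_dist a (xb b) (yb b)) => [r| |].
- have [q [_ hu hi]] := KL u Ha p1 E eta1.
  by exists q => r'; rewrite E => -[<-].
- by exists [::] => r'; rewrite E.
- by exists [::] => r'; rewrite E.
Qed.

Definition P := projT1 (choice exists_good).
Lemma hP b : good b (P b).
Proof. exact: (projT2 (choice exists_good)). Qed.

Definition Fb (b e : bond d) : \bar R :=
  if e \in map fst (P b) then (eta `^ p * (wgt p b e * en a u e))%:E else 0%E.

Lemma en_ge0 e : 0 <= en a u e.
Proof. by rewrite /en; apply: mulr_ge0; [case/andP: (Ha e)|exact: sqr_ge0]. Qed.

Lemma wgt_ge0 (b e : bond d) : 0 <= wgt p b e.
Proof. exact: powR_ge0. Qed.

Lemma Fb_ge0 b e : (0 <= Fb b e)%E.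
Proof.
rewrite /Fb; case: ifP => // _; rewrite lee_fin mulr_ge0 ?powR_ge0 //.
by rewrite mulr_ge0 ?wgt_ge0 ?en_ge0.
Qed.

Lemma term_le b : ((`|grad u b| ^+ 2 * chem_dist_pow a p (xb b) (yb b))%:E <=
   \esum_(e in [set: bond d]) Fb b e)%E.
Proof.
rewrite /chem_dist_pow; case E: (chem_dist a (xb b) (yb b)) => [r| |]; last 2 first.
- by rewrite mulr0 esum_ge0 // => e _; exact: Fb_ge0.
- by rewrite mulr0 esum_ge0 // => e _; exact: Fb_ge0.
have [hu hi] := hP E.
apply: (le_trans (y := (eta `^ p * \sum_(s <- P b) wgt p b s.1 * en a u s.1)%:E)).
  by rewrite lee_fin.
apply: esum_ge; exists [set` map fst (P b)].
  by split; [exact: finite_seq|].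
rewrite -fsbig_seq // big_map mulr_sumr -sumEFin.
rewrite (eq_big_seq (fun s => Fb b s.1)) //.
by move=> s sq; rewrite /Fb map_f.
Qed.

Lemma Fb_le b e : (Fb b e <= (eta `^ p * en a u e)%:E * ((enorm R (zz b e) + 1) `^ (1 - p))%:E)%E.
Proof.
rewrite /Fb; case: ifP => _.
  rewrite -EFinM lee_fin /wgt.
  have -> : eta `^ p * ((enorm R (zz b e) + 1) `^ (1 - p) * en a u e) =
            eta `^ p * en a u e * (enorm R (zz b e) + 1) `^ (1 - p) by ring.
  by [].
by apply: mule_ge0; rewrite lee_fin ?powR_ge0 // mulr_ge0 ?powR_ge0 ?en_ge0.
Qed.

Lemma Cpd_ge0 : (0 <= @Cpd R d p)%E.
Proof. by apply: esum_ge0 => x _; rewrite lee_fin powR_ge0. Qed.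

Lemma sum_b_le e : (\esum_(b in [set: bond d]) Fb b e <= (eta `^ p * en a u e)%:E * @Cpd R d p)%E.
Proof.
apply: le_trans (le_esum (fun b _ => Fb_le b e)) _.
apply: le_trans (esum_scale_le _ _) _.
- by rewrite lee_fin mulr_ge0 ?powR_ge0 ?en_ge0.
- by move=> b; rewrite lee_fin powR_ge0.
apply: lee_wpmul2l; first by rewrite lee_fin mulr_ge0 ?powR_ge0 ?en_ge0.
apply: (esum_inj_le (e := fun b => zz b e) (h := fun z => ((enorm R z + 1) `^ (1 - p))%:E)).
- by move=> b1 b2; rewrite /zz => /addIr /sum_inj.
- by move=> z; rewrite lee_fin powR_ge0.
Qed.

Lemma chain :
  (\esum_(b in [set: bond d]) ((`|grad u b| ^+ 2 * chem_dist_pow a p (xb b) (yb b))%:E)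
   <= @Cpd R d p * ((eta `^ p)%:E * \esum_(b in [set: bond d]) ((a b * `|grad u b| ^+ 2)%:E)))%E.
Proof.
apply: le_trans (le_esum (fun b _ => term_le b)) _.
rewrite esum_swap; last exact: Fb_ge0.
apply: le_trans (le_esum (fun e _ => sum_b_le e)) _.
have -> : \esum_(e in [set: bond d]) ((eta `^ p * en a u e)%:E * @Cpd R d p)%E =
          \esum_(e in [set: bond d]) (@Cpd R d p * ((eta `^ p)%:E * (en a u e)%:E))%E.
  by apply: eq_esum => e _; rewrite muleC EFinM.
apply: le_trans (esum_scale_le _ _) _.
- exact: Cpd_ge0.
- by move=> e; rewrite -EFinM lee_fin mulr_ge0 ?powR_ge0 ?en_ge0.
apply: lee_wpmul2l; first exact: Cpd_ge0.
apply: le_trans (esum_scale_le _ _) _.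
- by rewrite lee_fin powR_ge0.
- by move=> e; rewrite lee_fin en_ge0.
by [].
Qed.
End Main.

Unset Implicit Arguments. Set Strict Implicit.

Theorem lemma4 (R : realType) (d : nat) (p : R) (u : zpt d -> R) (a : bond d -> R) :
  (d%:R + 1 < p) ->
  in_Omega a ->
  (\esum_(b in [set: bond d]) ((`|grad u b| ^+ 2 * chem_dist_pow a p (xb b) (yb b))%:E)
     < +oo)%E ->
  (\esum_(b in [set: bond d]) ((a b * `|grad u b| ^+ 2)%:E) < +oo)%E ->
  (\esum_(b in [set: bond d]) ((`|grad u b| ^+ 2 * chem_dist_pow a p (xb b) (yb b))%:E)
   <= @Cpd R d p * \esum_(b in [set: bond d]) ((a b * `|grad u b| ^+ 2)%:E))%E.
Proof.
move=> hp Ha _ _.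
have p1 : 1 <= p by have := ler0n R d; lra.
have p0 : 0 < p by lra.
have RHS0 : (0 <= \esum_(b in [set: bond d]) ((a b * `|grad u b| ^+ 2)%:E))%E.
  by apply: esum_ge0 => b _; rewrite lee_fin; apply: mulr_ge0; [case/andP: (Ha b)|exact: sqr_ge0].
have Y0 := mule_ge0 (@Cpd_ge0 R d p) RHS0.
move: Y0 (fun eta (eta1 : 1 < eta) => chain u Ha p1 eta1).
set Y := (@Cpd R d p * _)%E.
set RHS := \esum_(b in _) _.
set X := \esum_(b in _) _.
move=> Y0 hc.
case EY: Y Y0 => [y| |] Y0; last 2 first.
- exact: leey.
- by [].
have y0 : 0 <= y by rewrite -lee_fin.
apply/lee_addgt0Pr => e e0.
pose t := e / (y + 1).
have t0 : 0 < t by rewrite /t divr_gt0 //; lra.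
pose eta := (1 + t) `^ (p^-1).
have eta1 : 1 < eta.
  have := @gt0_ltr_powR R (p^-1) ltac:(by rewrite invr_gt0) 1 (1 + t).
  rewrite powR1 /= => -> //; rewrite ?nnegrE; lra.
have etap : eta `^ p = 1 + t.
  by rewrite /eta -powRrM mulVf ?(gt_eqF p0) // powRr1 //; lra.
apply: le_trans (hc eta eta1) _.
rewrite muleCA -/Y EY etap -EFinM lee_fin.
have : t * y <= e.
  rewrite /t mulrAC ler_pdivrMr; last by lra.
  nra.
lra.
Qed.
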